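(* Let $X,Y$ be irreducible sofic shifts and let $f:X\to Y$ be a finite-to-one factor map which is right-continuing almost-everywhere with some retract $n\ge0$. Then $f$ is right-closing almost-everywhere.
   Context: Subshifts are closed shift-invariant subsets of $A^{\mathbb Z}$, $A$ finite, with shift $\sigma(x)_i=x_{i+1}$; a factor map is a continuous, shift-commuting, onto map; finite-to-one means every point has finitely many preimages. A point $x\in X$ is left-transitive in $X$ if $\{\sigma^i(x): i\le 0\}$ is dense in $X$. Points $x,y$ are left-asymptotic if there is $n$ with $x_i=y_i$ for all $i\le n$. A factor map $f:X\to Y$ is right-closing almost-everywhere if for all left-transitive $x,y\in X$ that are left-asymptotic, $f(x)=f(y)$ implies $x=y$. For an integer $n\ge0$, $f$ is right-continuing almost-everywhere with retract $n$ if for every $x\in X$ and every left-transitive $y\in Y$ with $f(x)_i=y_i$ for all $i\le n$, there exists $x'\in X$ with $x'_i=x_i$ for all $i\le 0$ and $f(x')=y$. *)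

(* Defs.v *)
From mathcomp Require Import all_boot.
From Stdlib Require Import ZArith List.

Set Implicit Arguments.
Unset Strict Implicit.
Unset Printing Implicit Defensive.

Definition config (A : Type) := Z -> A.

Definition shift (A : Type) (x : config A) : config A := fun i => x (i + 1)%Z.

Definition shiftk (A : Type) (k : Z) (x : config A) : config A := fun i => x (i + k)%Z.

Definition agree_on (A : Type) (m : Z) (x y : config A) : Prop :=
  forall i, (- m <= i <= m)%Z -> x i = y i.

Definition closed_set (A : Type) (X : config A -> Prop) : Prop :=
  forall x, (forall m, exists y, X y /\ agree_on m x y) -> X x.

Definition subshift (A : finType) (X : config A -> Prop) : Prop :=
  closed_set X /\ (forall x, X x -> X (shift x)) /\
  (forall x, X x -> exists y, X y /\ shift y = x).

(* Sofic shift (Lind–Marcus Def. 3.1.3): the set of label sequences of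
   bi-infinite paths in a finite labeled graph (V, E, src, tgt, lab). *)
Definition sofic (A : finType) (X : config A -> Prop) : Prop :=
  exists (V E : finType) (src tgt : E -> V) (lab : E -> A),
    forall x, X x <->
      exists p : Z -> E,
        (forall i, tgt (p i) = src (p (i + 1)%Z)) /\ (forall i, lab (p i) = x i).

(* Irreducible: for all words u, v of the language of X there is w with
   u w v in the language.  Words are windows u = x[a..b], v = y[c..d] of
   points of X; the point z carries u on [a,b], then a gap w of length g,
   then v. *)
Definition irreducible (A : finType) (X : config A -> Prop) : Prop :=
  forall x y, X x -> X y -> forall a b c d : Z,
    exists z g, X z /\ (0 <= g)%Z /\
      (forall i, (a <= i <= b)%Z -> z i = x i) /\
      (forall j, (c <= j <= d)%Z -> z (j - c + b + 1 + g)%Z = y j).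

Definition continuous_on (A B : finType) (X : config A -> Prop)
  (f : config A -> config B) : Prop :=
  forall x, X x -> forall m, exists k,
    forall x', X x' -> agree_on k x x' -> agree_on m (f x) (f x').

Definition factor_map (A B : finType) (X : config A -> Prop) (Y : config B -> Prop)
  (f : config A -> config B) : Prop :=
  (forall x, X x -> Y (f x)) /\
  continuous_on X f /\
  (forall x, X x -> f (shift x) = shift (f x)) /\
  (forall y, Y y -> exists x, X x /\ f x = y).

Definition finite_to_one (A B : finType) (X : config A -> Prop)
  (f : config A -> config B) : Prop :=
  forall y : config B, exists l : list (config A),
    forall x, X x -> f x = y -> In x l.

Definition left_transitive (A : finType) (X : config A -> Prop) (x : config A) : Prop :=
  forall y, X y -> forall m, exists i, (i <= 0)%Z /\ agree_on m (shiftk i x) y.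

Definition left_asymptotic (A : Type) (x y : config A) : Prop :=
  exists n : Z, forall i, (i <= n)%Z -> x i = y i.

Definition right_closing_ae (A B : finType) (X : config A -> Prop)
  (f : config A -> config B) : Prop :=
  forall x y, X x -> X y -> left_transitive X x -> left_transitive X y ->
    left_asymptotic x y -> f x = f y -> x = y.

Definition right_continuing_ae (A B : finType) (X : config A -> Prop)
  (Y : config B -> Prop) (f : config A -> config B) (n : nat) : Prop :=
  forall x y, X x -> Y y -> left_transitive Y y ->
    (forall i, (i <= Z.of_nat n)%Z -> f x i = y i) ->
    exists x', X x' /\ (forall i, (i <= 0)%Z -> x' i = x i) /\ f x' = y.

(* Main.v *)
Require Import Defs.
From mathcomp Require Import all_boot.
From Stdlib Require Import ZArith List.
From Stdlib Require Import Lia Classical ClassicalDescription IndefiniteDescription FunctionalExtensionality Wf_nat.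

Set Implicit Arguments.
Unset Strict Implicit.
Local Open Scope Z_scope.

Lemma agree_mono (A : Type) (m1 m2 : Z) (a b : config A) :
  m1 <= m2 -> agree_on m2 a b -> agree_on m1 a b.
Proof. intros H Hab i Hi; apply Hab; lia. Qed.

Lemma agree_sym (A : Type) m (a b : config A) : agree_on m a b -> agree_on m b a.
Proof. intros H i Hi; symmetry; auto. Qed.

Lemma agree_trans (A : Type) m (a b c : config A) :
  agree_on m a b -> agree_on m b c -> agree_on m a c.
Proof. intros H1 H2 i Hi; rewrite H1 //; auto. Qed.

Lemma shiftk_shiftk (A : Type) a b (x : config A) :
  shiftk a (shiftk b x) = shiftk (a + b) x.
Proof. apply functional_extensionality; intro i; unfold shiftk; f_equal; lia. Qed.

Lemma shiftk0 (A : Type) (x : config A) : shiftk 0 x = x.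
Proof. apply functional_extensionality; intro i; unfold shiftk; f_equal; lia. Qed.

Lemma shift_shiftk (A : Type) k (x : config A) : Defs.shift (shiftk k x) = shiftk (k + 1) x.
Proof. apply functional_extensionality; intro i; unfold shiftk, Defs.shift; f_equal; lia. Qed.

Lemma sofic_shiftk (A : finType) (X : config A -> Prop) :
  sofic X -> forall k x, X x -> X (shiftk k x).
Proof.
  intros [V [E [src [tgt [lab HX]]]]] k x Hx.
  apply HX in Hx as [p [Hp1 Hp2]].
  apply HX. exists (fun i => p (i + k)). split.
  - intro i. rewrite Hp1. f_equal. f_equal. lia.
  - intro i. rewrite Hp2. reflexivity.
Qed.

Lemma f_shiftk (A B : finType) (X : config A -> Prop) (f : config A -> config B) :
  (forall k x, X x -> X (shiftk k x)) ->
  (forall x, X x -> f (Defs.shift x) = Defs.shift (f x)) ->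
  forall k x, X x -> f (shiftk k x) = shiftk k (f x).
Proof.
  intros Hsh Hf.
  assert (Hn : forall (n : nat) x, X x -> f (shiftk (Z.of_nat n) x) = shiftk (Z.of_nat n) (f x)).
  { induction n as [|n IH]; intros x Hx.
    - simpl. rewrite !shiftk0. reflexivity.
    - replace (Z.of_nat (S n)) with (Z.of_nat n + 1) by lia.
      rewrite -!shift_shiftk Hf; [|now apply Hsh]. rewrite IH //. }
  intros k x Hx.
  destruct (Z_le_gt_dec 0 k) as [Hk|Hk].
  - replace k with (Z.of_nat (Z.to_nat k)) by lia. apply Hn; auto.
  - set u := shiftk k x.
    assert (Xu : X u) by (apply Hsh; auto).
    assert (Hx' : x = shiftk (Z.of_nat (Z.to_nat (- k))) u).
    { unfold u. rewrite shiftk_shiftk. replace (Z.of_nat (Z.to_nat (- k)) + k) with 0 by lia.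
      rewrite shiftk0 //. }
    rewrite {1}Hx' Hn // shiftk_shiftk.
    replace (k + Z.of_nat (Z.to_nat (- k))) with 0 by lia. rewrite shiftk0 //.
Qed.

Definition Inf (T : Type) (s : nat -> config T) (m : Z) (w : config T) :=
  forall N : nat, exists K : nat, le N K /\ agree_on m (s K) w.

Lemma inf_step (T : finType) (s : nat -> config T) m w :
  -1 <= m -> Inf s m w -> exists w', agree_on m w w' /\ Inf s (m + 1) w'.
Proof.
  intros Hm Hinf. apply NNPP; intro Hno.
  pose wab := fun (ab : T * T) (i : Z) =>
    if i =? - (m + 1) then ab.1 else if i =? m + 1 then ab.2 else w i.
  assert (Hag : forall ab, agree_on m w (wab ab)).
  { intros ab i Hi. unfold wab.
    destruct (Z.eqb_spec i (-(m+1))); [lia|].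
    destruct (Z.eqb_spec i (m+1)); [lia|]. reflexivity. }
  assert (HN : forall ab, exists N : nat, forall K, le N K -> ~ agree_on (m+1) (s K) (wab ab)).
  { intro ab. apply NNPP; intro H. apply Hno. exists (wab ab). split; [apply Hag|].
    intro N. apply NNPP; intro H2. apply H. exists N. intros K HK HK2. apply H2.
    exists K; auto. }
  destruct (functional_choice _ HN) as [Nf HNf].
  destruct (Hinf (\max_(ab : T * T) Nf ab)%N) as [K [HK HKag]].
  set ab := (s K (-(m+1)), s K (m+1)).
  apply (HNf ab K).
  - apply Nat.le_trans with (\max_(ab : T * T) Nf ab)%N; auto.
    apply/leP. apply leq_bigmax.
  - intros i Hi. unfold wab, ab; simpl.
    destruct (Z.eqb_spec i (-(m+1))) as [->|]; [reflexivity|].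
    destruct (Z.eqb_spec i (m+1)) as [->|]; [reflexivity|].
    apply HKag. lia.
Qed.

Lemma Z_of_nat_m1 (n : nat) : -1 <= Z.of_nat n - 1.
Proof. lia. Qed.
Arguments Z_of_nat_m1 : clear implicits.

Lemma cluster (T : finType) (s : nat -> config T) :
  exists c : config T, forall (m : Z) (N : nat), exists K : nat, le N K /\ agree_on m (s K) c.
Proof.
  assert (Hg : forall mw : Z * config T, exists w',
    (-1 <= mw.1 /\ Inf s mw.1 mw.2) -> agree_on mw.1 mw.2 w' /\ Inf s (mw.1 + 1) w').
  { intros [m w]. simpl. destruct (classic (-1 <= m /\ Inf s m w)) as [[H1 H2]|H].
    - destruct (inf_step H1 H2) as [w' Hw']. exists w'; auto.
    - exists w. intro; contradiction. }
  destruct (functional_choice _ Hg) as [g Hgs].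
  pose W := fix W (n : nat) : config T :=
    match n with O => s O | S n' => g (Z.of_nat n' - 1, W n') end.
  assert (HW : forall n, Inf s (Z.of_nat n - 1) (W n) /\ agree_on (Z.of_nat n - 1) (W n) (W (S n))).
  { induction n as [|n [IH1 IH2]].
    - assert (I0 : Inf s (-1) (s O)).
      { intro N. exists N. split; [lia|]. intros i Hi; lia. }
      split; [exact I0|].
      destruct (Hgs (Z.of_nat 0 - 1, W O) (conj (Z_of_nat_m1 0%nat) I0)) as [H1 H2].
      exact H1.
    - assert (Hi : Inf s (Z.of_nat (S n) - 1) (W (S n))).
      { destruct (Hgs (Z.of_nat n - 1, W n) (conj (Z_of_nat_m1 n) IH1)) as [H1 H2].
        simpl in H2. replace (Z.of_nat (S n) - 1) with (Z.of_nat n - 1 + 1) by lia. exact H2. }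
      split; [exact Hi|].
      destruct (Hgs (Z.of_nat (S n) - 1, W (S n)) (conj (Z_of_nat_m1 (S n)) Hi)) as [H1 H2].
      exact H1. }
  assert (Hch : forall n d, agree_on (Z.of_nat n - 1) (W n) (W (Nat.add n d))).
  { intros n d. induction d as [|d IH].
    - rewrite Nat.add_0_r. intros i _; reflexivity.
    - apply agree_trans with (W (Nat.add n d)); [exact IH|].
      rewrite Nat.add_succ_r. apply agree_mono with (Z.of_nat (Nat.add n d) - 1); [lia|].
      apply HW. }
  exists (fun i => W (S (Z.to_nat (Z.abs i))) i).
  intros m N.
  destruct (Z_lt_le_dec m 0) as [Hm|Hm].
  { exists N. split; [lia|]. intros i Hi; lia. }
  set n := S (Z.to_nat m).
  destruct (proj1 (HW n) N) as [K [HK HKa]].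
  exists K. split; [exact HK|].
  intros i Hi. rewrite HKa; [|unfold n; lia].
  set ni := S (Z.to_nat (Z.abs i)).
  assert (Hle : le ni n) by (unfold ni, n; lia).
  destruct (Nat.le_exists_sub ni n Hle) as [dd [Hdd _]].
  rewrite Hdd Nat.add_comm. symmetry. apply Hch. unfold ni. lia.
Qed.

Lemma sofic_closed (A : finType) (X : config A -> Prop) : sofic X -> closed_set X.
Proof.
  intros [V [E [src [tgt [lab HX]]]]] x Hx.
  assert (Hp : forall n : nat, exists p : config E,
    (forall i, tgt (p i) = src (p (i + 1))) /\ (forall i, - Z.of_nat n <= i <= Z.of_nat n -> lab (p i) = x i)).
  { intro n. destruct (Hx (Z.of_nat n)) as [y [Xy Hxy]].
    apply HX in Xy as [p [Hp1 Hp2]]. exists p. split; auto.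
    intros i Hi. rewrite Hp2. symmetry. apply Hxy. lia. }
  destruct (functional_choice _ Hp) as [ps Hps].
  destruct (cluster ps) as [P HP].
  apply HX. exists P. split.
  - intro i. destruct (HP (Z.abs i + 1) O) as [K [_ HK]].
    rewrite -HK; [|lia]. rewrite -HK; [|lia]. apply Hps.
  - intro i. destruct (HP (Z.abs i) (Z.to_nat (Z.abs i))) as [K [HKle HK]].
    rewrite -HK; [|lia]. apply Hps. lia.
Qed.

Lemma unif_local (A B : finType) (X : config A -> Prop) (f : config A -> config B) :
  closed_set X -> continuous_on X f ->
  exists R, 0 <= R /\ forall a b, X a -> X b -> agree_on R a b -> f a 0 = f b 0.
Proof.
  intros Hcl Hcont. apply NNPP; intro H.
  assert (Hs : forall n : nat, exists ab : config A * config A,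
    X ab.1 /\ X ab.2 /\ agree_on (Z.of_nat n) ab.1 ab.2 /\ f ab.1 0 <> f ab.2 0).
  { intro n. apply NNPP; intro Hn. apply H. exists (Z.of_nat n). split; [lia|].
    intros a b Xa Xb Hab. apply NNPP; intro Hne. apply Hn. exists (a, b); simpl; auto. }
  destruct (functional_choice _ Hs) as [sq Hsq].
  destruct (cluster (fun n => (sq n).1)) as [c Hc].
  assert (Xc : X c).
  { apply Hcl. intro m. destruct (Hc m O) as [K [_ HK]]. exists (sq K).1.
    split; [apply Hsq|]. apply agree_sym; auto. }
  destruct (Hcont c Xc 0) as [k0 Hk0].
  destruct (Hc k0 (Z.to_nat k0)) as [K [HKle HK]].
  destruct (Hsq K) as [Xa [Xb [Hab Hne]]].
  apply Hne.
  assert (H1 : agree_on 0 (f c) (f (sq K).1)) by (apply Hk0; auto; apply agree_sym; auto).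
  assert (H2 : agree_on 0 (f c) (f (sq K).2)).
  { apply Hk0; auto. apply agree_trans with (sq K).1; [apply agree_sym; auto|].
    apply agree_mono with (Z.of_nat K); auto. lia. }
  rewrite -H1; [|lia]. rewrite -H2; [|lia]. reflexivity.
Qed.

Lemma deep_LT (A : finType) (X : config A -> Prop) (x : config A) :
  (forall k x, X x -> X (shiftk k x)) -> Defs.left_transitive X x ->
  forall J, 0 <= J -> forall w, X w -> forall m, exists i, i <= - J /\ agree_on m (shiftk i x) w.
Proof.
  intros Hsh Hlt J HJ w Xw m.
  destruct (Hlt (shiftk J w) (Hsh _ _ Xw) (m + J)) as [i [Hi Hag]].
  exists (i - J). split; [lia|].
  intros l Hl. specialize (Hag (l - J)). unfold shiftk in *.
  replace (l + (i - J)) with (l - J + i) by lia.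
  rewrite Hag; [|lia]. f_equal; lia.
Qed.

Definition pb (P : Prop) : bool := if excluded_middle_informative P then true else false.

Lemma pbP (P : Prop) : pb P = true <-> P.
Proof. unfold pb. destruct (excluded_middle_informative P); split; auto; discriminate. Qed.

Definition Tset (A V E : finType) (src tgt : E -> V) (lab : E -> A) (w0 : config A) (al be : Z) : {set V} :=
  [set s | pb (exists (w : config A) (p : Z -> E), (forall i, tgt (p i) = src (p (i + 1))) /\
     (forall i, lab (p i) = w i) /\ (forall l, al <= l <= be -> w l = w0 l) /\ src (p (be + 1)) = s)].

Lemma least_nat (P : nat -> Prop) : (exists n, P n) -> exists n, P n /\ forall m, P m -> le n m.
Proof.
  intros [n Hn]. induction n as [n IH] using (well_founded_induction lt_wf).
  destruct (classic (exists m, P m /\ lt m n)) as [[m [Hm Hlt]]|Hno].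
  - exact (IH m Hlt Hm).
  - exists n. split; auto. intros m Hm. destruct (Nat.le_gt_cases n m); auto.
    exfalso; apply Hno; eauto.
Qed.

Lemma splice_X (A V E : finType) (src tgt : E -> V) (lab : E -> A) (X : config A -> Prop)
  (HX : forall x, X x <-> exists p : Z -> E,
        (forall i, tgt (p i) = src (p (i + 1)%Z)) /\ (forall i, lab (p i) = x i))
  (Hcl : closed_set X) (w0 : config A) (al be : Z)
  (Hmin : forall w1 (al1 be1 : Z), X w1 -> leq #|Tset src tgt lab w0 al be| #|Tset src tgt lab w1 al1 be1|)
  (w1 w2 : config A) :
  X w1 -> X w2 -> (forall l, al <= l <= be -> w1 l = w0 l) -> (forall l, al <= l <= be -> w2 l = w0 l) ->
  X (fun i => if i <=? be then w1 i else w2 i).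
Proof.
  intros X1 X2 H1 H2. apply Hcl. intro m.
  set al1 := Z.min al (- m).
  assert (Hsub : Tset src tgt lab w1 al1 be \subset Tset src tgt lab w0 al be).
  { apply/subsetP. intros s. rewrite !inE. move/pbP => [w [p [Hp1 [Hp2 [Hp3 Hp4]]]]].
    apply/pbP. exists w, p. repeat split; auto.
    intros l Hl. rewrite Hp3; [|lia]. apply H1; lia. }
  assert (Heq : Tset src tgt lab w1 al1 be = Tset src tgt lab w0 al be).
  { apply/eqP. rewrite eqEcard Hsub /=. apply Hmin; auto. }
  apply HX in X2 as [p2 [Hq1 Hq2]].
  assert (Hs2 : src (p2 (be + 1)) \in Tset src tgt lab w1 al1 be).
  { rewrite Heq inE. apply/pbP. exists w2, p2. repeat split; auto. }
  rewrite inE in Hs2. move/pbP: Hs2 => [w' [p' [Hp1 [Hp2 [Hp3 Hp4]]]]].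
  exists (fun i => if i <=? be then w' i else w2 i). split.
  - apply HX. exists (fun i => if i <=? be then p' i else p2 i). split.
    + intro i. destruct (Z.leb_spec i be); destruct (Z.leb_spec (i + 1) be); try lia; auto.
      replace i with be by lia. rewrite Hp1 Hp4. reflexivity.
    + intro i. destruct (Z.leb_spec i be); auto.
  - intros i Hi. destruct (Z.leb_spec i be); auto. symmetry; apply Hp3; lia.
Qed.

Lemma list_pigeon (T : Type) (P : T -> Z -> Prop) (l : list T) :
  (forall Q t t', t <= t' -> P Q t -> P Q t') ->
  (forall t, exists Q, In Q l /\ P Q t) -> exists Q, In Q l /\ forall t, P Q t.
Proof.
  intros Hmono. induction l as [|h l IH]; intros Hall.
  - destruct (Hall 0) as [Q [[] _]].
  - destruct (classic (forall t, P h t)) as [Hh|Hh].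
    + exists h; split; [left; auto|auto].
    + apply not_all_ex_not in Hh as [t0 Ht0].
      destruct IH as [Q [HQ HQt]].
      * intro t. destruct (Hall (Z.min t t0)) as [Q [[HQ|HQ] HP]].
        -- subst Q. exfalso; apply Ht0. apply Hmono with (Z.min t t0); auto; lia.
        -- exists Q; split; auto. apply Hmono with (Z.min t t0); auto; lia.
      * exists Q; split; [right; auto|auto].
Qed.

Theorem mainTheorem3 (A B : finType) (X : config A -> Prop) (Y : config B -> Prop)
  (f : config A -> config B) (n : nat) :
  sofic X -> sofic Y -> irreducible X -> irreducible Y ->
  factor_map X Y f -> finite_to_one X f ->
  right_continuing_ae X Y f n ->
  right_closing_ae X f.
Proof.
  intros HsX _ _ _ [HfY [Hcont [Hfsh Honto]]] Hfin Hrc.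
  intros x y Xx Xy LTx _ [k Hk] Hfxy.
  apply NNPP; intro Hne.
  assert (Hd : exists d, x d <> y d).
  { apply NNPP; intro H. apply Hne. apply functional_extensionality; intro i.
    apply NNPP; intro Hi. apply H; eauto. }
  destruct Hd as [d Hd].
  assert (Hkd : k < d). { destruct (Z_lt_le_dec k d); auto. exfalso; apply Hd; apply Hk; lia. }
  pose proof (sofic_shiftk HsX) as Hsh.
  pose proof (sofic_closed HsX) as Hcl.
  pose proof (f_shiftk Hsh Hfsh) as Hfk.
  destruct (unif_local Hcl Hcont) as [R [HR0 HR]].
  assert (Hloc : forall a b i, X a -> X b -> (forall l, i - R <= l <= i + R -> a l = b l) -> f a i = f b i).
  { intros a b i Xa Xb Hab.
    assert (E1 : forall c, f c i = shiftk i (f c) 0) by (intro; unfold shiftk; f_equal; lia).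
    rewrite (E1 a) (E1 b) -!Hfk //. apply HR; try apply Hsh; auto.
    intros l Hl; unfold shiftk; apply Hab; lia. }
  assert (HLTz : forall c, Defs.left_transitive Y (shiftk c (f x))).
  { intros c w Yw m. destruct (Honto w Yw) as [a [Xa Ha]].
    destruct (deep_LT Hsh LTx (J:=Z.abs c) (Z.abs_nonneg c) Xa (m + R)) as [i' [Hi' Hag]].
    exists (i' - c). split; [lia|]. intros l Hl. rewrite -Ha. unfold shiftk.
    replace (l + (i' - c) + c) with (l + i') by lia.
    change (f x (l + i')) with (shiftk i' (f x) l). rewrite -Hfk //.
    apply Hloc; auto. intros l' Hl'. apply Hag. lia. }
  assert (HRC : forall v c, X v -> (forall i, i <= c + Z.of_nat n -> f v i = f x i) ->
     exists Q, X Q /\ f Q = f x /\ forall i, i <= c -> Q i = v i).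
  { intros v c Xv Hv.
    assert (YT : Y (shiftk c (f x))) by (rewrite -Hfk //; apply HfY; apply Hsh; auto).
    destruct (Hrc (shiftk c v) (shiftk c (f x)) (Hsh _ _ Xv) YT (HLTz c)) as [x' [Xx' [Hx'1 Hx'2]]].
    { intros i Hi. rewrite Hfk //. unfold shiftk. apply Hv. lia. }
    exists (shiftk (- c) x'). split; [apply Hsh; auto|]. split.
    - rewrite Hfk // Hx'2 shiftk_shiftk. replace (-c + c) with 0 by lia. apply shiftk0.
    - intros i Hi. unfold shiftk. rewrite Hx'1; [|lia]. unfold shiftk. f_equal; lia. }
  destruct HsX as [V [E [src [tgt [lab HX]]]]].
  destruct (@least_nat (fun N => exists w0 al be, X w0 /\ #|Tset src tgt lab w0 al be| = N))
    as [N0 [[w0 [al [be [Xw0 HN0]]]] HNmin]].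
  { exists #|Tset src tgt lab x 0 0|. exists x, 0, 0. auto. }
  assert (Hmin : forall w1 (al1 be1 : Z), X w1 ->
            leq #|Tset src tgt lab w0 al be| #|Tset src tgt lab w1 al1 be1|).
  { intros w1 al1 be1 X1. rewrite HN0. apply/leP. apply HNmin. exists w1, al1, be1. auto. }
  pose proof (splice_X HX Hcl Hmin) as Hspl.
  destruct (deep_LT Hsh LTx (J:=Z.abs be + Z.abs k) ltac:(lia) Xw0 (Z.abs al + Z.abs be))
    as [o [Ho Hoag]].
  assert (Hocc : forall l, al <= l <= be -> x (l + o) = w0 l).
  { intros l Hl. apply (Hoag l). lia. }
  destruct (Hfin (f x)) as [lst Hlst].
  set P := fun (Q : config A) (t : Z) => exists a b, (forall i, i <= a -> Q i = x i) /\ Q b <> x b /\ b <= t.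
  assert (Hmono : forall Q t t', t <= t' -> P Q t -> P Q t').
  { intros Q t t' Ht [a [b [H1 [H2 H3]]]]. exists a, b. repeat split; auto. lia. }
  assert (Hmain : forall t, exists Q, In Q lst /\ P Q t).
  { intro t.
    set M := Z.abs d + Z.of_nat n + 2 * R + Z.abs (o + be) + Z.abs (o + al) + Z.abs k + 1.
    destruct (deep_LT Hsh LTx (J:=Z.abs t + Z.abs d) ltac:(lia) Xy M) as [j [Hj Hjag]].
    assert (Hjx : forall l, - M <= l <= M -> x (l + j) = y l) by (intros l Hl; apply (Hjag l); lia).
    set w1 := shiftk (j + o) x. set w2 := shiftk o x.
    assert (H1 : forall l, al <= l <= be -> w1 l = w0 l).
    { intros l Hl. unfold w1, shiftk. replace (l + (j + o)) with ((l + o) + j) by lia.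
      rewrite Hjx; [|lia]. rewrite -Hk; [|lia]. apply Hocc; auto. }
    assert (H2 : forall l, al <= l <= be -> w2 l = w0 l) by (intros; apply Hocc; auto).
    pose proof (Hspl w1 w2 (Hsh _ _ Xx) (Hsh _ _ Xx) H1 H2) as Xsp.
    set v := shiftk (- (j + o)) (fun i => if i <=? be then w1 i else w2 i).
    assert (Xv : X v) by (apply Hsh; auto).
    assert (Hv1 : forall i, i <= j + o + be -> v i = x i).
    { intros i Hi. unfold v, shiftk at 1. destruct (Z.leb_spec (i + - (j + o)) be); [|lia].
      unfold w1, shiftk. f_equal; lia. }
    assert (Hv2 : forall i, j + o + be < i -> v i = x (i - j)).
    { intros i Hi. unfold v, shiftk at 1. destruct (Z.leb_spec (i + - (j + o)) be); [lia|].
      unfold w2, shiftk. f_equal; lia. }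
    assert (Himg : forall i, i <= j + d + Z.of_nat n -> f v i = f x i).
    { intros i Hi. destruct (Z_le_gt_dec i (j + o + be - R)) as [Hi1|Hi1].
      - apply Hloc; auto. intros l Hl. apply Hv1. lia.
      - transitivity (f (shiftk (- j) x) i).
        + apply Hloc; [exact Xv | apply Hsh; exact Xx |]. intros l Hl. unfold shiftk.
          destruct (Z_le_gt_dec l (j + o + be)) as [Hl1|Hl1].
          * rewrite Hv1; [|lia]. replace l with ((l - j) + j) at 1 by lia. rewrite Hjx; [|lia].
            rewrite Hk; [|lia]. f_equal; lia.
          * rewrite Hv2; [|lia]. f_equal; lia.
        + rewrite Hfk //. transitivity (f (shiftk (- j) y) i).
          * rewrite Hfk // -Hfxy. reflexivity.
          * symmetry. apply Hloc; [exact Xx | apply Hsh; exact Xy |]. intros l Hl. unfold shiftk.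
            replace l with ((l - j) + j) at 1 by lia. rewrite Hjx; [|lia]. f_equal; lia. }
    destruct (HRC v (j + d) Xv Himg) as [Q [XQ [fQ HQ]]].
    exists Q. split; [apply Hlst; auto|].
    exists (j + o + be), (j + d). split; [|split].
    - intros i Hi. rewrite HQ; [|lia]. apply Hv1; lia.
    - rewrite HQ; [|lia]. rewrite Hv2; [|lia]. replace (j + d - j) with d by lia.
      replace (j + d) with (d + j) by lia. rewrite Hjx; [|lia]. auto.
    - lia. }
  destruct (list_pigeon Hmono Hmain) as [Q [_ HQ]].
  destruct (HQ 0) as [a [b0 [Ha _]]].
  destruct (HQ a) as [a' [b [_ [Hb Hba]]]].
  apply Hb. apply Ha. exact Hba.
Qed.
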